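(* Let $(G,\sigma)$ be a finite connected signed graph satisfying $CD^{\sigma}(0,N)$ for some $N\in(1,\infty]$. Then every nonzero eigenvalue $\lambda^{\sigma}$ of $\Delta^{\sigma}$ satisfies \[ \lambda^\sigma\geq \frac{1}{4\left(1+\sqrt{(N-1)/N}\right)}\cdot\frac{1}{d(D+1)\lceil (D+1)/2\rceil}, \] where $d$ is the maximal vertex degree and $D$ the diameter of $G$, and $\sqrt{(N-1)/N}:=1$ when $N=\infty$.
   Context: $G=(V,E)$ is a finite simple connected graph with degrees $d_x$; $\sigma:E\to\{\pm1\}$, $\sigma_{xy}=\sigma(\{x,y\})$. Signed Laplacian $\Delta^{\sigma}f(x)=\frac{1}{d_x}\sum_{y\sim x}(\sigma_{xy}f(y)-f(x))$; $\Delta$ is the case $\sigma\equiv+1$; eigenvalues: $-\Delta^\sigma f=\lambda f$, $f\ne0$. $\Gamma^{\sigma}(f,g)=\frac12\{\Delta(fg)-g\Delta^{\sigma}f-f\Delta^{\sigma}g\}$, $\Gamma_2^{\sigma}(f,g)=\frac12\{\Delta\Gamma^{\sigma}(f,g)-\Gamma^{\sigma}(g,\Delta^{\sigma}f)-\Gamma^{\sigma}(f,\Delta^{\sigma}g)\}$. $CD^{\sigma}(K,N)$ means $\Gamma_2^{\sigma}(f,f)(x)\ge\frac1N(\Delta^\sigma f)^2(x)+K\Gamma^\sigma(f,f)(x)$ for all $f:V\to\mathbb{R}$, $x\in V$ ($\frac1N=0$ if $N=\infty$). $\lceil\cdot\rceil$ is the ceiling. *)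

(* Defs.v *)
From HB Require Import structures.
From mathcomp Require Import all_boot all_order all_algebra.
From mathcomp Require Import reals.
Set Implicit Arguments. Unset Strict Implicit. Unset Printing Implicit Defensive.
Import Order.TTheory GRing.Theory Num.Theory.
Local Open Scope ring_scope.

Section SignedGraph.
Variable R : realType.
Variable T : finType.
Variable e : rel T.

Definition sg_simple := symmetric e /\ irreflexive e.
Definition sg_connected := forall x y : T, connect e x y.

Definition signature (sigma : T -> T -> R) :=
  forall x y, e x y -> sigma x y = sigma y x /\ (sigma x y = 1 \/ sigma x y = -1).

Definition deg (x : T) : nat := #|[set y | e x y]|.

Definition lapS (sigma : T -> T -> R) (f : T -> R) (x : T) : R :=
  (deg x)%:R^-1 * \sum_(y | e x y) (sigma x y * f y - f x).

Definition lap (f : T -> R) (x : T) : R := lapS (fun _ _ => 1) f x.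

Definition GammaS (sigma : T -> T -> R) (f g : T -> R) (x : T) : R :=
  2^-1 * (lap (fun z => f z * g z) x - g x * lapS sigma f x - f x * lapS sigma g x).

Definition Gamma2S (sigma : T -> T -> R) (f g : T -> R) (x : T) : R :=
  2^-1 * (lap (GammaS sigma f g) x
          - GammaS sigma g (lapS sigma f) x - GammaS sigma f (lapS sigma g) x).

(* N in (1, +oo] is represented by [N : option R], [None] = +oo *)
Definition invN (N : option R) : R := if N is Some n then n^-1 else 0.

Definition CD (sigma : T -> T -> R) (K : R) (N : option R) :=
  forall (f : T -> R) (x : T),
    Gamma2S sigma f f x >= invN N * (lapS sigma f x) ^+ 2 + K * GammaS sigma f f x.

Definition sg_eigenvalue (sigma : T -> T -> R) (lam : R) :=
  exists f : T -> R, (exists x, f x != 0) /\ forall x, - lapS sigma f x = lam * f x.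

Definition max_deg : nat := \max_(x : T) deg x.

Definition walk_len (n : nat) (x y : T) : bool :=
  [exists p : n.-tuple T, path e x p && (last x p == y)].

(* graph distance: least n with a walk of length n from x to y
   (for a connected graph it is < #|T|) *)
Definition dist (x y : T) : nat := find (fun n => walk_len n x y) (iota 0 #|T|).

Definition diameter : nat := \max_(x : T) \max_(y : T) dist x y.

Definition sqrtN (N : option R) : R :=
  if N is Some n then Num.sqrt ((n - 1) / n) else 1.

Definition N_gt1 (N : option R) : Prop := if N is Some n then 1 < n else True.

End SignedGraph.

(* Main.v *)
Require Import Defs.
From HB Require Import structures.
From mathcomp Require Import all_boot all_order all_algebra.
From mathcomp Require Import reals.
From mathcomp Require Import lra ring.
From Stdlib Require Import Classical_Prop.
Import Order.TTheory GRing.Theory Num.Theory.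
Local Open Scope ring_scope.

Section Pure.
Variable R : realType.

Lemma cs_seq (ds : seq R) :
  (\sum_(d <- ds) d)^+2 <= (size ds)%:R * \sum_(d <- ds) d^+2.
Proof.
elim: ds => [|a t IH]; first by rewrite !big_nil expr0n /= mul0r.
rewrite !big_cons /=.
case: t IH => [|b t'] IH.
  rewrite !big_nil /=; lra.
move: IH.
set A := \sum_(d <- b :: t') d; set Q := \sum_(d <- b :: t') d^+2 => IH.
have Q0 : 0 <= Q by rewrite /Q; apply: sumr_ge0 => i _; apply: sqr_ge0.
set n := (size (b :: t'))%:R in IH *.
have n0 : 0 < n by rewrite /n ltr0n.
rewrite -natr1 -/n.
have H : 0 <= (n * a - A)^+2 by apply: sqr_ge0.
have H2 : 0 <= n * ((n + 1) * (a ^+ 2 + Q) - (a + A) ^+ 2) by nra.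
have : 0 <= ((n + 1) * (a ^+ 2 + Q) - (a + A) ^+ 2).
  by rewrite (pmulr_rge0 _ n0) in H2.
lra.
Qed.

Lemma sq_path (S d0 : R) (t : seq R) :
  path (fun a b => a^+2 + b^+2 <= S) d0 t ->
  2 * \sum_(d <- d0 :: t) d^+2 <= (size t)%:R * S + d0^+2 + (last d0 t)^+2.
Proof.
elim: t d0 => [|d1 t IH] d0 /=.
  by rewrite big_cons big_nil mul0r add0r addr0; lra.
move=> /andP [h01 hp].
have := IH d1 hp; rewrite !big_cons -natr1; lra.
Qed.

Lemma PL (S : R) (ds : seq R) :
  0 <= S -> all (fun d => d^+2 <= S) ds ->
  (if ds is d0 :: t then path (fun a b => a^+2 + b^+2 <= S) d0 t else true) ->
  2 * (\sum_(d <- ds) d)^+2 <= ((size ds) * (size ds).+1)%:R * S.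
Proof.
move=> S0 hall hp.
have hcs := cs_seq ds.
case: ds hall hp hcs => [|d0 t] hall hp hcs.
  by rewrite big_nil expr0n /= mulr0 mul0r.
have hq := @sq_path S d0 t hp.
move: hall => /= /andP [hd0 /allP hall].
have hl : (last d0 t)^+2 <= S.
  have := mem_last d0 t; rewrite inE => /orP [/eqP -> //| /hall //].
set Q := \sum_(d <- d0 :: t) d^+2 in hq hcs.
set A := \sum_(d <- d0 :: t) d in hcs *.
set n := (size t)%:R in hq.
have -> : ((size (d0 :: t)) * (size (d0 :: t)).+1)%:R = (n + 1) * (n + 2) :> R.
  by rewrite /n /= natrM -!natr1; ring.
have n0 : 0 <= n by rewrite /n ler0n.
have e1 : (size (d0 :: t))%:R = n + 1 :> R by rewrite /n /= -natr1.
rewrite e1 in hcs.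
nra.
Qed.

End Pure.
Section Reach.
Variable T : finType.
Variable e : rel T.

Lemma size_shorten (x : T) p : (size (shorten x p) <= size p)%N.
Proof.
elim: p x => [|y p IH] x //=.
case: ifP => _ /=; last by rewrite ltnS IH.
exact: leq_trans (IH x) (leqnSn _).
Qed.

Lemma walk_of_len n x y : walk_len e n x y ->
  exists p, [/\ path e x p, last x p = y, uniq (x :: p) & (size p <= n)%N].
Proof.
move=> /existsP [t /andP [hp /eqP hl]].
have hs := size_shorten x t; rewrite size_tuple in hs.
move: hs; rewrite -hl.
case: (shortenP hp) => q hq hu _ hs.
by exists q.
Qed.

Lemma walk_dist x y : sg_connected e -> walk_len e (dist e x y) x y.
Proof.
move=> hc; have /connectP [p hp hl] := hc x y.
case: (shortenP hp) hl => q hq hu _ hl.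
have hsz : (size q < #|T|)%N.
  move/card_uniqP: hu => /= <-; exact: max_card.
have hw : walk_len e (size q) x y.
  by apply/existsP; exists (in_tuple q); rewrite /= hq /= hl eqxx.
have hh : has (fun n => walk_len e n x y) (iota 0 #|T|).
  by apply/hasP; exists (size q) => //; rewrite mem_iota.
have := nth_find 0 hh.
rewrite /dist nth_iota //.
by move: hh; rewrite has_find size_iota.
Qed.

Lemma dist_le_diam x y : (dist e x y <= diameter e)%N.
Proof.
rewrite /diameter.
apply: leq_trans (leq_bigmax x).
exact: (leq_bigmax (F := fun y => dist e x y) y).
Qed.

Lemma reach x y : sg_connected e ->
  exists p, [/\ path e x p, last x p = y, uniq (x :: p) & (size p <= diameter e)%N].
Proof.
move=> hc; have [p [h1 h2 h3 h4]] := walk_of_len _ _ _ (walk_dist x y hc).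
exists p; split => //; exact: leq_trans h4 (dist_le_diam x y).
Qed.
End Reach.

Section Walks.
Variable R : realType.
Variable T : finType.
Variable e : rel T.
Variable sigma : T -> T -> R.
Variable f : T -> R.
Hypothesis hsig : signature e sigma.
Hypothesis hsym : symmetric e.

Lemma sig2 {x y} : e x y -> sigma x y ^+ 2 = 1.
Proof. by move=> /hsig [_ [->|->]]; rewrite ?expr1n ?sqrrN ?expr1n. Qed.

Lemma sig_pm {x y} : e x y -> sigma x y = 1 \/ sigma x y = -1.
Proof. by move=> /hsig []. Qed.

Fixpoint dsq (x : T) (p : seq T) : seq R :=
  if p is y :: p' then `|sigma x y * f y - f x| :: dsq y p' else [::].
Fixpoint wsign (x : T) (p : seq T) : R :=
  if p is y :: p' then sigma x y * wsign y p' else 1.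
Definition wval x p := wsign x p * f (last x p).
Fixpoint nb (x : T) (p : seq T) : bool :=
  if p is y :: p' then (if p' is z :: _ then x != z else true) && nb y p'
  else true.
Definition Sv (v : T) : R := \sum_(w | e v w) (sigma v w * f w - f v)^+2.

Lemma Sv_ge0 v : 0 <= Sv v.
Proof. by apply: sumr_ge0 => w _; apply: sqr_ge0. Qed.

Lemma size_dsq x p : size (dsq x p) = size p.
Proof. by elim: p x => [|y p IH] x //=; rewrite IH. Qed.

Lemma wsign_pm x p : path e x p -> wsign x p = 1 \/ wsign x p = -1.
Proof.
elim: p x => [|y p IH] x /=; first by left.
move=> /andP [hxy /IH [->|->]]; case: (sig_pm hxy) => ->;
  rewrite ?mulr1 ?mulrN1 ?opprK; by [left|right].
Qed.

Lemma wsign_rcons x p z : wsign x (rcons p z) = wsign x p * sigma (last x p) z.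
Proof. by elim: p x => [|y p IH] x /=; rewrite ?mul1r ?mulr1 // IH mulrA. Qed.

Lemma change x p : path e x p -> `|f x - wval x p| <= \sum_(d <- dsq x p) d.
Proof.
rewrite /wval.
elim: p x => [|y p IH] x /=; first by rewrite mul1r subrr normr0 big_nil.
move=> /andP [hxy hp]; rewrite big_cons.
have := IH y hp.
have -> : f x - sigma x y * wsign y p * f (last y p)
   = (f x - sigma x y * f y) + sigma x y * (f y - wsign y p * f (last y p)) by ring.
move=> h.
apply: (le_trans (ler_normD _ _)).
rewrite normrM.
have -> : `|sigma x y| = 1 by case: (sig_pm hxy) => ->; rewrite ?normrN normr1.
rewrite mul1r distrC.
by apply: lerD.
Qed.

Lemma uniq_nb x p : uniq (x :: p) -> nb x p.
Proof.
elim: p x => [|y p IH] x //=.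
move=> /andP [hx /IH ->]; rewrite andbT.
case: p hx {IH} => [|z p] //=.
by rewrite !inE negb_or => /andP [_]; rewrite negb_or => /andP [].
Qed.

Lemma nb_rcons2 x q y z :
  nb x (rcons q y) -> last x q != z -> nb x (rcons (rcons q y) z).
Proof.
elim: q x => [|a q IH] x /=.
  by move=> _ ->.
move=> /andP [h1 h2] h3; rewrite (IH a h2 h3) andbT.
by case: q h1 {IH h2 h3}.
Qed.

Lemma sq_swap {x y} : e x y ->
  (sigma x y * f y - f x)^+2 = (sigma y x * f x - f y)^+2.
Proof.
move=> hxy; have [hs _] := hsig _ _ hxy; rewrite -hs.
have h2 := sig2 hxy.
apply/eqP; rewrite -subr_eq0; apply/eqP.
have -> : (sigma x y * f y - f x) ^+ 2 - (sigma x y * f x - f y) ^+ 2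
  = (sigma x y ^+ 2 - 1) * (f y ^+ 2 - f x ^+ 2) by ring.
by rewrite h2 subrr mul0r.
Qed.

Lemma term_le_Sv {v w} : e v w -> (sigma v w * f w - f v)^+2 <= Sv v.
Proof.
move=> hvw; rewrite /Sv (bigD1 w) //= lerDl.
by apply: sumr_ge0 => u _; apply: sqr_ge0.
Qed.

Lemma two_le_Sv v a b : e v a -> e v b -> a != b ->
  (sigma v a * f a - f v)^+2 + (sigma v b * f b - f v)^+2 <= Sv v.
Proof.
move=> ha hb hab; rewrite /Sv (bigD1 a) //= (bigD1 b) /=; last by rewrite hb eq_sym hab.
rewrite addrA lerDl.
by apply: sumr_ge0 => u _; apply: sqr_ge0.
Qed.

Variable Sm : R.
Hypothesis hSm : forall v, Sv v <= Sm.

Lemma dsq_all x p : path e x p -> all (fun d => d^+2 <= Sm) (dsq x p).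
Proof.
elim: p x => [|y p IH] x //= /andP [hxy hp].
rewrite (IH y hp) andbT real_normK ?num_real //.
exact: le_trans (term_le_Sv hxy) (hSm x).
Qed.

Lemma dsq_path x y p : path e x (y :: p) -> nb x (y :: p) ->
  path (fun a b => a^+2 + b^+2 <= Sm) `|sigma x y * f y - f x| (dsq y p).
Proof.
elim: p x y => [|z p IH] x y //=.
move=> /and3P [hxy hyz hp] /and3P [hxz hm hnb].
rewrite (IH y z) /= ?hyz ?hp ?hnb ?hm ?andbT //.
rewrite !real_normK ?num_real // sq_swap //.
apply: le_trans (hSm y).
apply: two_le_Sv => //; by rewrite hsym.
Qed.

Lemma WL x p : path e x p -> nb x p ->
  2 * (\sum_(d <- dsq x p) d)^+2 <= ((size p) * (size p).+1)%:R * Sm.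
Proof.
move=> hp hnb.
have S0 : 0 <= Sm := le_trans (Sv_ge0 x) (hSm x).
rewrite -(size_dsq x p); apply: PL => //; first exact: dsq_all.
case: p hp hnb => [|y p] //= hp hnb.
exact: dsq_path.
Qed.

Lemma natpoly (n : nat) : ((n * n.+1)%:R : R) = n%:R * (n%:R + 1).
Proof. by rewrite natrM -natr1. Qed.

Lemma WLD x p (D : nat) : path e x p -> nb x p -> (size p <= D)%N ->
  2 * (\sum_(d <- dsq x p) d)^+2 <= (D%:R * (D%:R + 1)) * Sm.
Proof.
move=> hp hnb hs; apply: (le_trans (WL _ _ hp hnb)).
have S0 : 0 <= Sm := le_trans (Sv_ge0 x) (hSm x).
rewrite -natpoly; apply: ler_wpM2r => //; rewrite ler_nat.
by apply: leq_mul => //.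
Qed.

Variable lam : R.
Hypothesis heig : forall y, - lapS e sigma f y = lam * f y.
Hypothesis hlam : 0 < lam.
Hypothesis hconn : sg_connected e.
Variable x0 : T.
Variable M : R.
Hypothesis hx0 : f x0 = M.
Hypothesis hM : forall y, `|f y| <= M.

Lemma wval_abs x p : path e x p -> 0 < wval x p -> wval x p = `|f (last x p)|.
Proof.
rewrite /wval => hp; case: (wsign_pm _ _ hp) => ->; rewrite ?mul1r ?mulN1r => h.
  by rewrite gtr0_norm.
by rewrite ltr0_norm // -oppr_gt0.
Qed.

Lemma core : 2 * M ^+ 2 <= ((diameter e)%:R + 1) ^+ 2 * Sm.
Proof.
set D := diameter e.
have S0 : 0 <= Sm := le_trans (Sv_ge0 x0) (hSm x0).
have M0 : 0 <= M := le_trans (normr_ge0 _) (hM x0).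
have hD0 : 0 <= D%:R :> R by rewrite ler0n.
have [[p [hp hu hs hv]] | hB] :=
  classic (exists p, [/\ path e x0 p, uniq (x0 :: p), (size p <= D)%N & wval x0 p <= 0]).
  have hc := change _ _ hp; rewrite hx0 in hc.
  have hW := WLD _ _ _ hp (uniq_nb _ _ hu) hs.
  set A := \sum_(d <- dsq x0 p) d in hc hW.
  have h1 : M <= A.
    apply: le_trans hc; apply: le_trans (ler_norm _); lra.
  have h2 : M ^+ 2 <= A ^+ 2 by nra.
  nra.
have hB' : forall p, path e x0 p -> uniq (x0 :: p) -> (size p <= D)%N -> 0 < wval x0 p.
  move=> p hp hu hs; rewrite ltNge; apply/negP => hv; apply: hB; by exists p.
pose y0 := [arg min_(i < x0) `|f i|]%O.
have hy0 : forall z, `|f y0| <= `|f z|.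
  rewrite /y0; case: (@arg_minP _ R T x0 xpredT (fun i => `|f i|) isT) => w _ hw.
  by move=> z; apply: hw.
have [p0 [hp0 hl0 hu0 hs0]] := @reach T e x0 y0 hconn.
rewrite -/D in hs0.
have hv0 := hB' p0 hp0 hu0 hs0.
set tau := wsign x0 p0.
have htau := wsign_pm _ _ hp0.
have htf : tau * f y0 = `|f y0|.
  by have := wval_abs _ _ hp0 hv0; rewrite /wval hl0.
have hfy0 : 0 < `|f y0| by rewrite -htf; move: hv0; rewrite /wval hl0.
have /existsP [z /andP [hz hlt]] : [exists z, e y0 z && (tau * sigma y0 z * f z < tau * f y0)].
  apply: contraT => /existsPn hn; exfalso.
  have h1 : 0 <= tau * lapS e sigma f y0.
    rewrite /lapS mulrCA; apply: mulr_ge0; first by rewrite invr_ge0 ler0n.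
    rewrite mulr_sumr; apply: sumr_ge0 => w hw.
    have := hn w; rewrite hw /= -leNgt => hle.
    rewrite mulrBr subr_ge0; by rewrite mulrA.
  have h2 : tau * lapS e sigma f y0 = - lam * `|f y0|.
    by rewrite -htf -[lapS _ _ _ _]opprK heig; ring.
  rewrite h2 in h1.
  have := mulr_gt0 hlam hfy0; lra.
have hez := hz.
have [hsym' _] := hsig _ _ hez.
have hfz : tau * sigma y0 z * f z = - `|f z|.
  have hle := hy0 z.
  have : tau * sigma y0 z = 1 \/ tau * sigma y0 z = -1.
    rewrite /tau; case: htau => ->; case: (sig_pm hz) => ->; rewrite ?mulr1 ?mul1r ?mulrN1 ?opprK;
    by [left|right].
  rewrite htf in hlt.
  case => hs; rewrite hs in hlt *; rewrite ?mul1r ?mulN1r in hlt *.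
    case: (lerP 0 (f z)) => hz0; [have hn : `|f z| = f z by rewrite ger0_norm | have hn : `|f z| = - f z by rewrite ltr0_norm]; rewrite hn in hle *; lra.
  case: (lerP 0 (f z)) => hz0; [have hn : `|f z| = f z by rewrite ger0_norm | have hn : `|f z| = - f z by rewrite ltr0_norm]; rewrite hn in hle *; lra.
have hnbW : nb x0 (rcons p0 z).
  have [hq | [q [y' hq]]] : p0 = [::] \/ exists q y', p0 = rcons q y'.
    by case/lastP: (p0) => [|q y']; [left | right; exists q, y'].
    by rewrite hq.
  have ht : tau = wsign x0 q * sigma (last x0 q) y' by rewrite /tau hq wsign_rcons.
  rewrite hq in hp0 hl0 hu0 hs0 *.
  rewrite last_rcons in hl0; rewrite hl0 in ht *.
  apply: nb_rcons2; first by rewrite -hl0; exact: uniq_nb _ _ hu0.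
  apply/negP => /eqP hqz.
  move: hp0; rewrite rcons_path => /andP [hpq _].
  have huq : uniq (x0 :: q).
    by move: hu0; rewrite -rcons_cons rcons_uniq => /andP [].
  have hsq : (size q <= D)%N by move: hs0; rewrite size_rcons; apply: ltnW.
  have := hB' q hpq huq hsq.
  rewrite /wval hqz.
  rewrite hqz in ht.
  rewrite ht -hsym' in hfz.
  have h2 := sig2 hz.
  have -> : wsign x0 q * f z = wsign x0 q * sigma y0 z * sigma y0 z * f z.
    by rewrite -!mulrA (mulrA (sigma y0 z)) -expr2 h2 mul1r.
  rewrite hfz; have := normr_ge0 (f z); lra.
set W := rcons p0 z.
have hpW : path e x0 W by rewrite /W rcons_path hp0 hl0.
have hvW : wval x0 W = - `|f z|.
  by rewrite /wval /W wsign_rcons last_rcons hl0 -/tau.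
have hsW : (size W <= D.+1)%N by rewrite /W size_rcons ltnS.
have hcW := change _ _ hpW; rewrite hx0 hvW opprK in hcW.
have hWW := WLD _ _ _ hpW hnbW hsW.
have [pz [hpz hlz huz hsz]] := @reach T e x0 z hconn.
rewrite -/D in hsz.
have hvz := wval_abs _ _ hpz (hB' pz hpz huz hsz); rewrite hlz in hvz.
have hcz := change _ _ hpz; rewrite hx0 hvz in hcz.
have hWz := WLD _ _ _ hpz (uniq_nb _ _ huz) hsz.
set A := \sum_(d <- dsq x0 W) d in hcW hWW.
set B := \sum_(d <- dsq x0 pz) d in hcz hWz.
set h := `|f z| in hcW hcz.
have hh0 : 0 <= h by rewrite /h normr_ge0.
have hhM : h <= M by rewrite /h hM.
have hA : M + h <= A by apply: le_trans hcW; rewrite ger0_norm; lra.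
have hB2 : M - h <= B by apply: le_trans hcz; rewrite ger0_norm; lra.
have hA2 : (M + h) ^+ 2 <= A ^+ 2 by nra.
have hB3 : (M - h) ^+ 2 <= B ^+ 2 by nra.
rewrite -natr1 in hWW.
nra.
Qed.

End Walks.
Arguments Sv {R T} e sigma f v.
Arguments sig2 {R T e sigma} hsig {x y}.
Arguments sig_pm {R T e sigma} hsig {x y}.
Arguments Sv_ge0 {R T} e sigma f v.

Section Lap.
Variable R : realType.
Variable T : finType.
Variable e : rel T.
Variable sigma : T -> T -> R.
Hypothesis hsig : signature e sigma.

Lemma lapS_scale (s : T -> T -> R) (g h : T -> R) c x :
  (forall y, g y = c * h y) -> lapS e s g x = c * lapS e s h x.
Proof.
move=> hg; rewrite /lapS mulrCA; congr (_ * _); rewrite mulr_sumr.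
by apply: eq_bigr => y _; rewrite !hg; ring.
Qed.

Lemma lap_lin (A B : T -> R) c x :
  lap e (fun y => A y + c * B y) x = lap e A x + c * lap e B x.
Proof.
rewrite /lap /lapS mulrCA -mulrDr; congr (_ * _).
rewrite mulr_sumr -big_split; apply: eq_bigr => y _ /=; ring.
Qed.

Lemma Gamma_scale (f g : T -> R) c x :
  (forall y, g y = c * f y) -> GammaS e sigma f g x = c * GammaS e sigma f f x.
Proof.
move=> hg; rewrite /GammaS /lap.
rewrite (@lapS_scale _ (fun z => f z * g z) (fun z => f z * f z) c);
  last by move=> y; rewrite hg; ring.
rewrite (@lapS_scale _ g f c) // hg; ring.
Qed.

Lemma Gamma_formula (f : T -> R) x :
  GammaS e sigma f f x = 2^-1 * ((deg e x)%:R^-1 * Sv e sigma f x).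
Proof.
rewrite /GammaS /lap /lapS.
set d := (deg e x)%:R^-1.
have H : \sum_(y | e x y) (1 * (f y * f y) - f x * f x)
     - 2 * f x * \sum_(y | e x y) (sigma x y * f y - f x) = Sv e sigma f x.
  rewrite mulr_sumr -sumrB /Sv; apply: eq_bigr => y hy.
  have h2 := sig2 hsig hy.
  apply/eqP; rewrite -subr_eq0; apply/eqP.
  have -> : 1 * (f y * f y) - f x * f x - 2 * f x * (sigma x y * f y - f x) -
    (sigma x y * f y - f x) ^+ 2 = (1 - sigma x y ^+ 2) * f y ^+ 2 by ring.
  by rewrite h2 subrr mul0r.
rewrite -H; ring.
Qed.

Lemma Sv_bound (f : T -> R) x K d :
  GammaS e sigma f f x <= K -> 0 <= K -> (deg e x <= d)%N ->
  Sv e sigma f x <= 2 * d%:R * K.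
Proof.
move=> hG hK hd.
have hdK : 0 <= 2 * d%:R * K by rewrite mulr_ge0 ?mulr_ge0 ?ler0n.
case: (posnP (deg e x)) => hdeg.
  have -> : Sv e sigma f x = 0; last by [].
  rewrite /Sv big_pred0 // => y.
  move: hdeg; rewrite /deg => /card0_eq /(_ y).
  by rewrite !inE.
have hdR : 0 < (deg e x)%:R :> R by rewrite ltr0n.
have hS : Sv e sigma f x = 2 * (deg e x)%:R * GammaS e sigma f f x.
  by rewrite Gamma_formula; field; rewrite gt_eqF.
rewrite hS.
have hdd : (deg e x)%:R <= d%:R :> R by rewrite ler_nat.
have hG0 : 0 <= GammaS e sigma f f x by rewrite Gamma_formula mulr_ge0 ?mulr_ge0 ?invr_ge0 ?ler0n ?Sv_ge0.
nra.
Qed.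

Lemma grad (N : option R) (f : T -> R) (lam M : R) :
  CD e sigma 0 N -> N_gt1 N -> (forall y, - lapS e sigma f y = lam * f y) ->
  0 < lam -> (forall y, `|f y| <= M) ->
  forall y, GammaS e sigma f f y <= 2 * (1 + sqrtN N) * lam * M ^+ 2.
Proof.
move=> hCD hN heig hlam hM y.
have [hu0 hu2] : 0 < sqrtN N /\ sqrtN N ^+ 2 = 1 - invN N.
  case: N hCD hN => [n|] _ /= hn; last by split; [lra | rewrite expr1n subr0].
  have hn0 : 0 < n by lra.
  have hq : 0 < (n - 1) / n by rewrite divr_gt0 // subr_gt0.
  split; first by rewrite sqrtr_gt0.
  by rewrite sqr_sqrtr ?ltW //; field; rewrite gt_eqF.
set u := sqrtN N in hu0 hu2 *.
have hl : forall y, lapS e sigma f y = - lam * f y.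
  by move=> z; rewrite -[LHS]opprK heig mulNr.
set G := GammaS e sigma f f.
have L1 : forall z, Gamma2S e sigma f f z = 2^-1 * (lap e G z + 2 * lam * G z).
  move=> z; rewrite /Gamma2S !(@Gamma_scale f (lapS e sigma f) (- lam)) //.
  rewrite /G; ring.
have L2 : forall z, lap e (fun w => f w * f w) z = 2 * G z - 2 * lam * f z ^+ 2.
  move=> z; rewrite /G /GammaS hl; by field; rewrite ?pnatr_eq0.
have L3 : forall z, 2^-1 * (lap e G z + 2 * lam * G z) >= invN N * (lam ^+ 2 * f z ^+ 2).
  move=> z; have := hCD f z; rewrite L1 hl mul0r addr0.
  by rewrite exprMn sqrrN.
set b := 1 + u.
set F := fun z => G z + (b * lam) * (f z * f z).
have [x _ hx] : exists2 x, true & forall z, F z <= F x.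
  case: (@arg_maxP _ R T y xpredT F isT) => x _ hx; exists x => //.
  by move=> z; apply: hx.
have lapF : lap e F x <= 0.
  rewrite /lap /lapS; apply: mulr_ge0_le0; first by rewrite invr_ge0 ler0n.
  by apply: sumr_le0 => z _; rewrite mul1r subr_le0.
have hlin : lap e F x = lap e G x + b * lam * lap e (fun w => f w * f w) x.
  by rewrite /F lap_lin.
rewrite hlin L2 in lapF.
have L3x := L3 x.
have hfx : f x ^+ 2 <= M ^+ 2.
  have h1 := hM x; have h0 := normr_ge0 (f x).
  rewrite -real_normK ?num_real //; nra.
set g := G x in lapF L3x *.
set a := f x ^+ 2 in lapF L3x hfx *.
have hinv : invN N = 1 - u ^+ 2 by rewrite hu2; ring.
rewrite hinv in L3x.
have key : 2 * lam * u * (g - lam * (1 + u) * a) <= 0.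
  rewrite /b in lapF; nra.
have hk : g - lam * (1 + u) * a <= 0.
  by rewrite -(pmulr_rle0 _ (_ : 0 < 2 * lam * u)) // !mulr_gt0.
have hFx : F x <= 2 * (1 + u) * lam * M ^+ 2.
  rewrite /F -/g -expr2 -/a /b.
  have ha : 0 <= a by rewrite /a sqr_ge0.
  have hp : 0 <= (1 + u) * lam * (M ^+ 2 - a) by rewrite !mulr_ge0 // ?subr_ge0 //; lra.
  lra.
apply: (le_trans _ hFx); apply: (le_trans _ (hx y)).
rewrite /F lerDl -expr2; apply: mulr_ge0; last exact: sqr_ge0.
apply: mulr_ge0; last exact: ltW.
rewrite /b; lra.
Qed.

End Lap.

Theorem corollary3p9 (R : realType) (T : finType) (e : rel T)
  (sigma : T -> T -> R) (N : option R) (lam : R) :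
  sg_simple e -> sg_connected e -> signature e sigma ->
  N_gt1 N -> CD e sigma 0 N ->
  sg_eigenvalue e sigma lam -> lam != 0 ->
  lam >= (4 * (1 + sqrtN N))^-1 *
         ((max_deg e)%:R * (diameter e).+1%:R
          * (Num.ceil ((diameter e).+1%:R / 2 : R))%:~R)^-1.
Proof.
move=> [hsym _] hconn hsig hN hCD [f [[xnz hxnz] heig]] hlam0.
pose x0 := [arg max_(i > xnz) `|f i|]%O.
have hx0 : forall z, `|f z| <= `|f x0|.
  rewrite /x0; case: (@arg_maxP _ R T xnz xpredT (fun i => `|f i|) isT) => w _ hw.
  by move=> z; apply: hw.
set M := `|f x0|.
have hM0 : 0 < M.
  apply: lt_le_trans (hx0 xnz); by rewrite normr_gt0.
pose s : R := if f x0 < 0 then -1 else 1.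
pose g := fun y => s * f y.
have hs2 : `|s| = 1 by rewrite /s; case: ifP => _; rewrite ?normrN normr1.
have hgabs : forall y, `|g y| = `|f y| by move=> y; rewrite /g normrM hs2 mul1r.
have hgx0 : g x0 = M.
  rewrite /g /s /M; case: ifP => h; first by rewrite ltr0_norm // mulN1r.
  by rewrite mul1r ger0_norm // leNgt h.
have hgM : forall y, `|g y| <= M by move=> y; rewrite hgabs.
have heigg : forall y, - lapS e sigma g y = lam * g y.
  move=> y; rewrite (@lapS_scale R T e sigma g f s) // -mulrN heig /g; ring.
have hlam : 0 < lam.
  have h : 0 <= - lapS e sigma g x0.
    rewrite /lapS -mulrN; apply: mulr_ge0; first by rewrite invr_ge0 ler0n.
    rewrite -sumrN; apply: sumr_ge0 => z hz.
    rewrite opprB subr_ge0 hgx0.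
    have := hgM z; have := ler_norm (g z); have := ler_norm (- g z); rewrite normrN.
    by case: (sig_pm hsig hz) => ->; rewrite ?mul1r ?mulN1r; lra.
  rewrite heigg hgx0 in h.
  have : 0 <= lam by rewrite -(pmulr_lge0 _ hM0).
  rewrite le_eqVlt eq_sym (negbTE hlam0) //.
set d := max_deg e.
set K := 2 * (1 + sqrtN N) * lam * M ^+ 2.
have hu0 : 0 <= sqrtN N by case: (N) => [n|] /=; rewrite ?sqrtr_ge0 ?ler01.
have hK0 : 0 <= K by rewrite /K !mulr_ge0 ?sqr_ge0 ?ltW //; lra.
have hSm : forall v, Sv e sigma g v <= 2 * d%:R * K.
  move=> v; apply: (@Sv_bound R T e sigma hsig) => //.
    exact: (@grad R T e sigma N g lam M hCD hN heigg hlam hgM).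
  exact: (leq_bigmax (F := fun x => deg e x) v).
have hcore := @core R T e sigma g hsig hsym _ hSm lam heigg hlam hconn x0 M hgx0 hgM.
set D := (diameter e)%:R in hcore *.
set c := (Num.ceil ((diameter e).+1%:R / 2 : R))%:~R.
have hc : (D + 1) / 2 <= c by rewrite /c /D natr1; apply: ceil_ge.
set u := sqrtN N in hK0 hu0 hcore *.
have hD0 : 0 <= D by rewrite /D ler0n.
have hd0 : 0 <= d%:R :> R by rewrite ler0n.
have key : 1 <= (D + 1) ^+ 2 * d%:R * (2 * (1 + u)) * lam.
  have hM2 : 0 < M ^+ 2 by rewrite exprn_gt0.
  rewrite -(ler_pM2r hM2) mul1r.
  rewrite /K -/u in hcore; lra.
rewrite -[(diameter e).+1%:R]natr1 -/D -invfM.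
set P := 4 * (1 + u) * (d%:R * (D + 1) * c).
have hP : (D + 1) ^+ 2 * d%:R * (2 * (1 + u)) <= P.
  rewrite /P.
  have : 0 <= (1 + u) * d%:R * (D + 1) by rewrite !mulr_ge0 //; lra.
  nra.
have hPl : 1 <= P * lam by apply: le_trans key _; rewrite ler_pM2r //.
have hP0 : 0 < P.
  case: (ltrP 0 P) => // hP0; exfalso.
  have : P * lam <= 0 by rewrite mulr_le0_ge0 // ltW.
  lra.
rewrite -(ler_pM2l hP0) mulfV ?gt_eqF //.
Qed.
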